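(* Assume the Setting and consider Algorithm 1 with noisy data $y^\delta$ satisfying $\|y^\delta-y\|\le\delta$, $\delta>0$, where $\tau>1$ and $\mu_0>0$ satisfy $1-\frac{1+\eta}{\tau}-\eta-\frac{\mu_0}{4\sigma}>0$. Then the algorithm terminates after finitely many steps, i.e. there is a finite integer $n_\delta$ with $\|F(x_{n_\delta}^\delta)-y^\delta\|\le\tau\delta<\|F(x_n^\delta)-y^\delta\|$ for all $0\le n<n_\delta$.
   Context: Setting. Let $X,Y$ be real Hilbert spaces. Let $\mathcal R:X\to(-\infty,\infty]$ be proper, lower semicontinuous and strongly convex with constant $\sigma>0$, i.e. $\mathcal R(t\bar x+(1-t)x)+\sigma t(1-t)\|\bar x-x\|^2\le t\mathcal R(\bar x)+(1-t)\mathcal R(x)$ for all $\bar x,x\in\mathrm{dom}(\mathcal R)$ and $t\in[0,1]$. For $\xi\in\partial\mathcal R(x)$ (subdifferential) the Bregman distance is $D_{\mathcal R}^{\xi}(z,x)=\mathcal R(z)-\mathcal R(x)-\langle\xi,z-x\rangle$. The convex conjugate $\mathcal R^*$ is differentiable with $\|\nabla\mathcal R^*(\bar\xi)-\nabla\mathcal R^*(\xi)\|\le\|\bar\xi-\xi\|/(2\sigma)$, and $\nabla\mathcal R^*(\xi)=\arg\min_{x\in X}\{\mathcal R(x)-\langle\xi,x\rangle\}$ (unique minimizer), with $\xi\in\partial\mathcal R(\nabla\mathcal R^*(\xi))$. Let $F:\mathrm{dom}(F)\subset X\to Y$ and $y\in Y$. Assume: (b) there are $\rho>0$, $x_0\in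 X$, $\xi_0\in\partial\mathcal R(x_0)$ with $B_{2\rho}(x_0):=\{x:\|x-x_0\|\le 2\rho\}\subset\mathrm{dom}(F)$, and $F(x)=y$ has a solution $\bar x$ with $D_{\mathcal R}^{\xi_0}(\bar x,x_0)\le\sigma\rho^2$; (c) $F$ is weakly closed: if $x_n\in\mathrm{dom}(F)$, $x_n\rightharpoonup x$ and $F(x_n)\to v$, then $x\in\mathrm{dom}(F)$ and $F(x)=v$; (d) there are bounded linear operators $L(x):X\to Y$, $x\in B_{2\rho}(x_0)$, with $x\mapsto L(x)$ continuous on $B_{2\rho}(x_0)$, a constant $\eta\in[0,1)$ with $\|F(x)-F(\bar x)-L(\bar x)(x-\bar x)\|\le\eta\|F(x)-F(\bar x)\|$ for all $x,\bar x\in B_{2\rho}(x_0)$, and a constant $L>0$ with $\|L(x)\|\le L$ on $B_{2\rho}(x_0)$. Algorithm 1 (noisy data $y^\delta$ with $\|y^\delta-y\|\le\delta$, $\delta>0$). Parameters: $\tau>1$, $\beta\in(0,\infty]$, $\mu_0>0$, $\mu_1>0$, and a fixed choice of one of two step-size rules: (constant) $\alpha_n^\delta=\mu_0/L^2$, or (adaptive) $\alpha_n^\delta=\min\{\mu_0\|r_n^\delta\|^2/\|g_n^\delta\|^2,\mu_1\}$ (with $\mu_0\|r_n^\delta\|^2/\|g_n^\delta\|^2:=+\infty$ if $g_n^\delta=0$). Set $\xi_{-1}^\delta=\xi_0^\delta=\xi_0$, $x_0^\delta=x_0=\nabla\mathcal R^*(\xi_0)$. For $n\ge0$: (i) $r_n^\delta:=F(x_n^\delta)-y^\delta$;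 if $\|r_n^\delta\|\le\tau\delta$, stop and output $x_n^\delta$ (the stopping index is denoted $n_\delta$). (ii) $g_n^\delta:=L(x_n^\delta)^*r_n^\delta$ and $\alpha_n^\delta$ by the chosen rule. (iii) $m_n^\delta:=\xi_n^\delta-\xi_{n-1}^\delta$; $\tilde\gamma_0^\delta:=0$ and for $n\ge1$, $\tilde\gamma_n^\delta:=\langle m_n^\delta,x_n^\delta-x_{n-1}^\delta\rangle-(1-\eta)\alpha_{n-1}^\delta\|r_{n-1}^\delta\|^2+(1+\eta)\alpha_{n-1}^\delta\delta\|r_{n-1}^\delta\|+\beta_{n-1}^\delta\tilde\gamma_{n-1}^\delta$. (iv) $\beta_n^\delta:=\min\{\max\{0,(\alpha_n^\delta\langle g_n^\delta,m_n^\delta\rangle-2\sigma\tilde\gamma_n^\delta)/\|m_n^\delta\|^2\},\beta\}$ if $m_n^\delta\ne0$, and $\beta_n^\delta:=0$ if $m_n^\delta=0$. (v) $\xi_{n+1}^\delta:=\xi_n^\delta-\alpha_n^\delta g_n^\delta+\beta_n^\delta m_n^\delta$, $x_{n+1}^\delta:=\nabla\mathcal R^*(\xi_{n+1}^\delta)$. *)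

(* Defs.v *)
From HB Require Import structures.
From mathcomp Require Import all_boot all_order all_algebra.
From mathcomp Require Import constructive_ereal reals.
Set Implicit Arguments. Unset Strict Implicit. Unset Printing Implicit Defensive.
Import Order.TTheory GRing.Theory Num.Theory.
Local Open Scope ring_scope.

Section Hilbert.
Variable R : realType.

Definition inner_product (X : lmodType R) (ip : X -> X -> R) : Prop :=
  [/\ (forall x y, ip x y = ip y x),
      (forall (a : R) x y z, ip (a *: x + y) z = (a * ip x z + ip y z)%R),
      (forall x, (0 <= ip x x)%R) &
      (forall x, ip x x = 0%R -> x = 0)].

Definition ipnorm (X : lmodType R) (ip : X -> X -> R) (x : X) : R :=
  Num.sqrt (ip x x).

Definition tends_to0 (u : nat -> R) : Prop :=
  forall e : R, (0 < e)%R -> exists N : nat, forall n, (N <= n)%N -> (`|u n| <= e)%R.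

Definition tends_to (u : nat -> R) (l : R) : Prop := tends_to0 (fun n => (u n - l)%R).

Definition complete_ip (X : lmodType R) (ip : X -> X -> R) : Prop :=
  forall u : nat -> X,
    (forall e : R, (0 < e)%R -> exists N : nat, forall m n, (N <= m)%N -> (N <= n)%N ->
        (ipnorm ip (u m - u n) <= e)%R) ->
    exists l : X, tends_to0 (fun n => ipnorm ip (u n - l)).

Definition hilbert (X : lmodType R) (ip : X -> X -> R) : Prop :=
  inner_product ip /\ complete_ip ip.

Definition weak_cvg (X : lmodType R) (ip : X -> X -> R) (u : nat -> X) (x : X) : Prop :=
  forall z, tends_to (fun n => ip (u n) z) (ip x z).

Definition domR (X : lmodType R) (f : X -> \bar R) (x : X) : Prop := (f x < +oo)%E.

Definition proper_fun (X : lmodType R) (f : X -> \bar R) : Prop :=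
  (exists x, f x \is a fin_num) /\ (forall x, f x != -oo%E).

Definition lsc (X : lmodType R) (ip : X -> X -> R) (f : X -> \bar R) : Prop :=
  forall (a : R) (u : nat -> X) (x : X),
    (forall n, (f (u n) <= a%:E)%E) -> tends_to0 (fun n => ipnorm ip (u n - x)) ->
    (f x <= a%:E)%E.

Definition strongly_convex (X : lmodType R) (ip : X -> X -> R) (f : X -> \bar R)
    (sigma : R) : Prop :=
  forall xb x : X, domR f xb -> domR f x -> forall t : R, (0 <= t <= 1)%R ->
    (f (t *: xb + (1 - t) *: x)%R + (sigma * t * (1 - t) * (ipnorm ip (xb - x)) ^+ 2)%:E
      <= (t * fine (f xb) + (1 - t) * fine (f x))%:E)%E.

Definition subdiff (X : lmodType R) (ip : X -> X -> R) (f : X -> \bar R) (x xi : X) : Prop :=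
  f x \is a fin_num /\ forall z, (f x + (ip xi (z - x))%:E <= f z)%E.

Definition bregman (X : lmodType R) (ip : X -> X -> R) (f : X -> \bar R) (xi z x : X)
  : \bar R := (f z - f x - (ip xi (z - x))%:E)%E.

(* gradRs xi is the (unique) minimizer of f - <xi, .>, i.e. grad R^*(xi) *)
Definition is_grad_conj (X : lmodType R) (ip : X -> X -> R) (f : X -> \bar R)
    (gradRs : X -> X) : Prop :=
  forall xi x, (f (gradRs xi) - (ip xi (gradRs xi))%:E <= f x - (ip xi x)%:E)%E.

Inductive step_rule := ConstantStep | AdaptiveStep.

Section Algo.
Variables (X Y : lmodType R) (ipX : X -> X -> R) (ipY : Y -> Y -> R).
Variables (F : X -> Y) (Lstar : X -> Y -> X) (gradRs : X -> X).
Variables (ydelta : Y) (delta eta sigma Lc mu0 mu1 : R) (betab : \bar R) (rule : step_rule).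

Definition alpha_of (r : Y) (g : X) : R :=
  match rule with
  | ConstantStep => (mu0 / Lc ^+ 2)%R
  | AdaptiveStep =>
      if g == 0 then mu1
      else Order.min (mu0 * (ipnorm ipY r) ^+ 2 / (ipnorm ipX g) ^+ 2)%R mu1
  end.

Definition beta_of (alpha : R) (g m : X) (gam : R) : R :=
  if m == 0 then 0%R
  else fine (@Order.min _ (\bar R)
    (Order.max 0%R ((alpha * ipX g m - 2 * sigma * gam) / (ipnorm ipX m) ^+ 2)%R)%:E
    betab).

(* state at index n : (xi_{n-1}, xi_n, gamma~_n) *)
Definition algo_step (s : X * X * R) : X * X * R :=
  let: (xip, xic, gam) := s in
  let x := gradRs xic in
  let r := F x - ydelta in
  let g := Lstar x r in
  let alpha := alpha_of r g in
  let m := xic - xip in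
  let beta := beta_of alpha g m gam in
  let xin := xic - alpha *: g + beta *: m in
  let gamn := (ipX (xin - xic) (gradRs xin - x)
               - (1 - eta) * alpha * (ipnorm ipY r) ^+ 2
               + (1 + eta) * alpha * delta * ipnorm ipY r + beta * gam)%R in
  (xic, xin, gamn).

Definition algo_state (xi0 : X) (n : nat) : X * X * R :=
  iter n algo_step (xi0, xi0, 0%R).

Definition algo_x (xi0 : X) (n : nat) : X := gradRs (algo_state xi0 n).1.2.

End Algo.
End Hilbert.

(* Main.v *)
Require Import Defs.
From HB Require Import structures.
From mathcomp Require Import all_boot all_order all_algebra.
From mathcomp Require Import constructive_ereal reals.
From mathcomp Require Import lra ring.
From Stdlib Require Import Classical.
Set Implicit Arguments. Unset Strict Implicit.
Import Order.TTheory GRing.Theory Num.Theory.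
Local Open Scope ring_scope.


Section IP.
Variables (R : realType) (V : lmodType R) (ip : V -> V -> R).
Hypothesis Hip : inner_product ip.

Lemma ipC x y : ip x y = ip y x.
Proof. by case: Hip => H1 H2 H3 H4; auto. Qed.
Lemma ip_lin a x y z : ip (a *: x + y) z = a * ip x z + ip y z.
Proof. by case: Hip => H1 H2 H3 H4; auto. Qed.
Lemma ip_ge0 x : 0 <= ip x x.
Proof. by case: Hip => H1 H2 H3 H4; auto. Qed.
Lemma ip_eq0 x : ip x x = 0 -> x = 0.
Proof. by case: Hip => H1 H2 H3 H4; auto. Qed.

Lemma ip0l z : ip 0 z = 0.
Proof.
have := ip_lin (-1) 0 0 z.
by rewrite scaleN1r addNr mulN1r addNr.
Qed.
Lemma ipDl x y z : ip (x + y) z = ip x z + ip y z.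
Proof. by have := ip_lin 1 x y z; rewrite scale1r mul1r. Qed.
Lemma ipZl a x z : ip (a *: x) z = a * ip x z.
Proof. by have := ip_lin a x 0 z; rewrite !addr0 ip0l addr0. Qed.
Lemma ipNl x z : ip (- x) z = - ip x z.
Proof. by rewrite -scaleN1r ipZl mulN1r. Qed.
Lemma ipBl x y z : ip (x - y) z = ip x z - ip y z.
Proof. by rewrite ipDl ipNl. Qed.
Lemma ip0r z : ip z 0 = 0.
Proof. by rewrite ipC ip0l. Qed.
Lemma ipDr x y z : ip z (x + y) = ip z x + ip z y.
Proof. by rewrite ipC ipDl !(ipC z). Qed.
Lemma ipZr a x z : ip z (a *: x) = a * ip z x.
Proof. by rewrite ipC ipZl ipC. Qed.
Lemma ipNr x z : ip z (- x) = - ip z x.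
Proof. by rewrite ipC ipNl ipC. Qed.
Lemma ipBr x y z : ip z (x - y) = ip z x - ip z y.
Proof. by rewrite ipDr ipNr. Qed.

Local Notation nrm := (ipnorm ip).
Lemma nrm_ge0 x : 0 <= nrm x.
Proof. exact: sqrtr_ge0. Qed.
Lemma nrm_sq x : nrm x ^+ 2 = ip x x.
Proof. by rewrite /ipnorm sqr_sqrtr // ip_ge0. Qed.

Lemma cs_sq x y : ip x y ^+ 2 <= ip x x * ip y y.
Proof.
have [y0|ny] := eqVneq (ip y y) 0.
  by rewrite (ip_eq0 y0) ip0r expr2 mulr0 ip0r mulr0.
have yp : 0 < ip y y by rewrite lt0r ny ip_ge0.
pose t := ip x y / ip y y.
have := ip_ge0 (x - t *: y).
rewrite ipBl !ipBr !ipZl !ipZr (ipC y x) => h.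
have e : t * ip y y = ip x y by rewrite /t divfK.
have : 0 <= ip x x - ip x y * t.
  by move: h; rewrite e; lra.
rewrite subr_ge0 => h2.
have := ler_wpM2r (ltW yp) h2.
by rewrite -mulrA e expr2.
Qed.

Lemma cs x y : `|ip x y| <= nrm x * nrm y.
Proof.
have h := cs_sq x y.
rewrite -!nrm_sq in h.
have a := nrm_ge0 x; have b := nrm_ge0 y.
rewrite -ler_sqr ?nnegrE ?mulr_ge0 // ?normr_ge0 //.
by rewrite real_normK ?num_real // exprMn.
Qed.

Lemma cs_le x y : ip x y <= nrm x * nrm y.
Proof. exact: le_trans (ler_norm _) (cs x y). Qed.
Lemma cs_ge x y : - (nrm x * nrm y) <= ip x y.
Proof. by rewrite lerNl; apply: le_trans (ler_norm _) _; rewrite normrN cs. Qed.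

Lemma nrm_le_sq x a : 0 <= a -> ip x x <= a ^+ 2 -> nrm x <= a.
Proof.
move=> a0 h; rewrite -nrm_sq in h.
by rewrite -ler_sqr ?nnegrE // nrm_ge0.
Qed.

Lemma nrm_tri x y : nrm (x + y) <= nrm x + nrm y.
Proof.
apply: nrm_le_sq; first by rewrite addr_ge0 ?nrm_ge0.
rewrite ipDl !ipDr (ipC y x) -!nrm_sq.
have := cs_le x y; lra.
Qed.

Lemma nrmN x : nrm (- x) = nrm x.
Proof. by rewrite /ipnorm ipNl ipNr opprK. Qed.

Lemma nrm0 : nrm 0 = 0.
Proof. by rewrite /ipnorm ip0l sqrtr0. Qed.
End IP.


Section Conv.
Variables (R : realType) (X : lmodType R) (ip : X -> X -> R) (Rf : X -> \bar R)
  (sigma : R).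
Hypothesis Hip : inner_product ip.
Hypothesis Hprop : proper_fun Rf.
Hypothesis Hsig : 0 < sigma.
Hypothesis Hsc : strongly_convex ip Rf sigma.

Definition fR x := fine (Rf x).

Lemma fin_ex {x} : Rf x \is a fin_num -> Rf x = (fR x)%:E.
Proof. by move=> h; rewrite /fR fineK. Qed.

Definition minim xi x := Rf x \is a fin_num /\
  forall z, Rf z \is a fin_num -> fR x - ip xi x <= fR z - ip xi z.

Lemma grad_minim gradRs : is_grad_conj ip Rf gradRs -> forall xi, minim xi (gradRs xi).
Proof.
move=> Hg xi.
case: Hprop => [[x1 fx1] nm].
have key : forall z, Rf z \is a fin_num ->
   (Rf (gradRs xi) \is a fin_num) /\ fR (gradRs xi) - ip xi (gradRs xi) <= fR z - ip xi z.
  move=> z fz; have := Hg xi z; rewrite (fin_ex fz).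
  have := nm (gradRs xi).
  rewrite /fR; case: (Rf (gradRs xi)) => [r| |] //= _.
split; first by case: (key x1 fx1).
by move=> z fz; case: (key z fz).
Qed.

Lemma subdiff_minim x xi : subdiff ip Rf x xi -> minim xi x.
Proof.
case=> fx h; split=> // z fz.
have := h z; rewrite (fin_ex fx) (fin_ex fz) -EFinD lee_fin ipBr //; lra.
Qed.

Lemma growth xi x : minim xi x -> forall z, Rf z \is a fin_num ->
  sigma * ip (z - x) (z - x) <= fR z - fR x - ip xi (z - x).
Proof.
move=> [fx hm] z fz.
set N := ip (z - x) (z - x).
set A := fR z - fR x - ip xi (z - x).
have main : forall t, 0 < t <= 1 -> sigma * (1 - t) * N <= A.
  move=> t /andP[t0 t1].
  have := @Hsc z x.
  rewrite /domR (fin_ex fz) (fin_ex fx) !ltry => /(_ isT isT t).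
  rewrite (ltW t0) t1 => /(_ isT).
  rewrite /ipnorm sqr_sqrtr ?ip_ge0 // -/N /fR !fineK //.
  set p := t *: z + (1 - t) *: x.
  move: (hm p); case: Hprop => _ nm; move: (nm p).
  rewrite /fR; case: (Rf p) => [rp| |] //= _.
  - move=> /(_ isT) hp; rewrite -EFinD lee_fin => hc.
    have ep : ip xi p = t * ip xi z + (1 - t) * ip xi x by rewrite /p ipDr ?ipZr.
    rewrite /A ipBr //.
    have : sigma * t * (1 - t) * N <= t * (fine (Rf z) - fine (Rf x) - ip xi z + ip xi x).
      move: hp hc; rewrite ep; move: (fine (Rf x)) (fine (Rf z)) (ip xi x) (ip xi z) => a b c d; lra.
    rewrite -!mulrA (mulrCA _ t) ler_pM2l // => h; rewrite /fR; rewrite mulrA in h; rewrite mulrA; lra.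
have A0 : 0 <= A by have := main 1; rewrite ltr01 lexx subrr mulr0 mul0r; apply.
rewrite leNgt; apply/negP => hlt.
have sN : 0 < sigma * N by lra.
pose t := (sigma * N - A) / (2 * (sigma * N)).
have et : t * (2 * (sigma * N)) = sigma * N - A by rewrite /t divfK // mulf_neq0 // gt_eqF.
have t0 : 0 < t by rewrite /t divr_gt0 //; lra.
have t1 : t <= 1.
  rewrite /t ler_pdivrMr ?mul1r; lra.
have := main t; rewrite t0 t1 => /(_ isT).
rewrite mulrBr mulr1 mulrBl.
have : sigma * t * N * 2 = sigma * N - A by rewrite -et; ring.
lra.
Qed.

Lemma breg_step xi xi' x x' : minim xi x -> Rf x' \is a fin_num ->
  fR x - fR x' - ip xi' (x - x') <= ip (xi' - xi) (xi' - xi) / (4 * sigma).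
Proof.
move=> mx fx'.
have g := growth mx fx'.
have s4 : 0 < 4 * sigma by rewrite mulr_gt0.
rewrite ler_pdivlMr //.
have h0 := ip_ge0 Hip ((2 * sigma) *: (x' - x) - (xi' - xi)).
rewrite !(ipBl Hip, ipBr Hip, ipZl Hip, ipZr Hip) in h0.
rewrite !(ipBl Hip, ipBr Hip) in g *.
rewrite !(ipC Hip x' xi) !(ipC Hip x xi) !(ipC Hip x' xi') !(ipC Hip x xi') in h0.
have g2 := ler_wpM2l (ltW s4) g.
rewrite /fR in g2 *.
move: (fine (Rf x)) (fine (Rf x')) g2 => a b g2.
rewrite !(ipC Hip x x') !(ipC Hip xi xi') in g2 h0 *.
lra.
Qed.
End Conv.


Section Main.
Variables (R : realType) (X Y : lmodType R) (ipX : X -> X -> R) (ipY : Y -> Y -> R)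
  (Rf : X -> \bar R) (sigma : R) (F : X -> Y) (y : Y) (rho : R) (x0 xi0 : X)
  (Lop : X -> X -> Y) (Lstar : X -> Y -> X) (eta Lc : R) (gradRs : X -> X)
  (ydelta : Y) (delta tau mu0 mu1 : R) (betab : \bar R) (rule : step_rule) (xb : X).
Hypotheses (HipX : inner_product ipX) (HipY : inner_product ipY)
  (Hprop : proper_fun Rf) (Hsig : 0 < sigma) (Hsc : strongly_convex ipX Rf sigma)
  (Hgrad : is_grad_conj ipX Rf gradRs) (Hrho : 0 < rho)
  (HFxb : F xb = y) (Hfxb : Rf xb \is a fin_num)
  (Hxbball : ipnorm ipX (xb - x0) <= rho)
  (HL : forall x, ipnorm ipX (x - x0) <= 2 * rho ->
     (forall (a : R) h k, Lop x (a *: h + k) = a *: Lop x h + Lop x k) /\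
     (forall h, ipnorm ipY (Lop x h) <= Lc * ipnorm ipX h) /\
     (forall h k, ipY (Lop x h) k = ipX h (Lstar x k)))
  (Heta : 0 <= eta < 1)
  (Htc : forall x xb, ipnorm ipX (x - x0) <= 2 * rho -> ipnorm ipX (xb - x0) <= 2 * rho ->
     ipnorm ipY (F x - F xb - Lop xb (x - xb)) <= eta * ipnorm ipY (F x - F xb))
  (HLc : 0 < Lc) (Hdelta : 0 < delta) (Hyd : ipnorm ipY (ydelta - y) <= delta)
  (Htau : 1 < tau) (Hbeta : (0 < betab)%E) (Hmu0 : 0 < mu0) (Hmu1 : 0 < mu1)
  (Hc : 0 < 1 - (1 + eta) / tau - eta - mu0 / (4 * sigma)).

Local Notation step := (algo_step ipX ipY F Lstar gradRs ydelta delta eta sigma Lc mu0 mu1 betab rule).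
Definition Dof xi := fR Rf xb - fR Rf (gradRs xi) - ipX xi (xb - gradRs xi).
Definition resid xi := ipnorm ipY (F (gradRs xi) - ydelta).
Definition kap := Order.min (mu0 / Lc ^+ 2) mu1 * (tau * delta) ^+ 2.
Definition cc := 1 - (1 + eta) / tau - eta - mu0 / (4 * sigma).

Lemma lin_neg (f : X -> Y) : (forall (a : R) h k, f (a *: h + k) = a *: f h + f k) ->
  forall h, f (- h) = - f h.
Proof.
move=> H h.
have f0 : f 0 = 0.
  have := H 1 0 0; rewrite !scale1r !addr0 => e.
  by apply: (@addrI _ (f 0)); rewrite addr0 -e.
by have := H (-1) h 0; rewrite addr0 f0 addr0 !scaleN1r.
Qed.

Lemma alpha_facts r g : ipnorm ipX g <= Lc * ipnorm ipY r ->
  let al := alpha_of ipX ipY Lc mu0 mu1 rule r g in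
  0 <= al /\ al * al * ipX g g <= al * mu0 * ipnorm ipY r ^+ 2 /\
  Order.min (mu0 / Lc ^+ 2) mu1 <= al.
Proof.
move=> hg al.
set nr := ipnorm ipY r; set ng := ipnorm ipX g.
have nr0 : 0 <= nr by exact: sqrtr_ge0.
have ng0 : 0 <= ng by exact: sqrtr_ge0.
have Ngg : ipX g g = ng ^+ 2 by rewrite nrm_sq.
have Lc2 : 0 < Lc ^+ 2 by rewrite exprn_gt0.
have hN : ng ^+ 2 <= Lc ^+ 2 * nr ^+ 2.
  by rewrite -exprMn; rewrite ler_pXn2r ?nnegrE ?mulr_ge0 // ltW.
rewrite Ngg /al /alpha_of; case: rule.
- have a0 : 0 <= mu0 / Lc ^+ 2 by rewrite divr_ge0 // ltW.
  split=> //; split; last by rewrite ge_min lexx.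
  set a := mu0 / Lc ^+ 2.
  have e : a * Lc ^+ 2 = mu0 by rewrite /a divfK // gt_eqF.
  have := ler_wpM2l (mulr_ge0 a0 a0) hN.
  have -> : a * a * (Lc ^+ 2 * nr ^+ 2) = a * (a * Lc ^+ 2) * nr ^+ 2 by ring.
  by rewrite e.
- case: eqP => [g0|/eqP g0].
    have -> : ng = 0 by rewrite /ng g0 nrm0.
    split; first exact: ltW.
    split; last by rewrite ge_min lexx orbT.
    rewrite expr0n /= mulr0 mulr_ge0 // ?mulr_ge0 ?exprn_ge0 // ltW //.
  have ng2 : 0 < ng ^+ 2.
    rewrite -Ngg lt0r ip_ge0 // andbT; apply/negP => /eqP /(ip_eq0 HipX).
    by move/eqP: g0.
  set t := mu0 * nr ^+ 2 / ng ^+ 2.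
  have t0 : 0 <= t by rewrite /t divr_ge0 ?mulr_ge0 ?exprn_ge0 // ltW.
  have al0 : 0 <= Order.min t mu1 by rewrite le_min t0 ltW.
  split=> //; split.
    have : Order.min t mu1 * ng ^+ 2 <= mu0 * nr ^+ 2.
      rewrite -ler_pdivlMr //; by rewrite ge_min lexx.
    move/(ler_wpM2l al0) => h; apply: le_trans _ (le_trans h _).
      by rewrite -mulrA.
    by rewrite -mulrA.
  rewrite le_min; apply/andP; split; last by rewrite ge_min lexx orbT.
  rewrite ge_min; apply/orP; left.
  rewrite /t ler_pdivrMr // mulrAC ler_pdivlMr //.
  have := ler_wpM2l (ltW Hmu0) hN; lra.
Qed.

Lemma beta_facts al g m gm :
  let be := beta_of ipX sigma betab al g m gm in
  0 <= be /\ be * be * ipX m m - 2 * al * be * ipX g m + 4 * sigma * be * gm <= 0.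
Proof.
move=> be; rewrite /be /beta_of; case: eqP => [_|/eqP m0].
  by rewrite lexx mul0r !mulr0 !mul0r subrr addr0.
set Nm := ipnorm ipX m ^+ 2.
have eNm : Nm = ipX m m by rewrite /Nm nrm_sq.
have Nm0 : 0 < Nm.
  rewrite eNm lt0r ip_ge0 // andbT; apply/negP => /eqP /(ip_eq0 HipX).
  by move/eqP: m0.
set q := (al * ipX g m - 2 * sigma * gm) / Nm.
have eq : q * Nm = al * ipX g m - 2 * sigma * gm by rewrite /q divfK // gt_eqF.
have [b [hb0 hbq]] : exists b, 0 <= b /\ b <= Order.max 0 q /\
    fine (Order.min (Order.max 0 q)%:E betab) = b.
  move: Hbeta; case: betab => [bb| |] //.
  - rewrite lte_fin => bb0; rewrite -EFin_min /=.
    exists (Order.min (Order.max 0 q) bb); split; first by rewrite le_min le_max lexx (ltW bb0).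
    by rewrite ge_min lexx.
  - move=> _; exists (Order.max 0 q); split; first by rewrite le_max lexx.
    split=> //; rewrite minEle leey //.
move: hbq => [hbq ->]; split=> //.
rewrite -eNm.
have e2 : b * b * Nm - 2 * al * b * ipX g m + 4 * sigma * b * gm =
          b * Nm * (b - 2 * q).
  have -> : b * Nm * (b - 2 * q) = b * b * Nm - 2 * b * (q * Nm) by ring.
  rewrite eq; ring.
rewrite e2.
have [q0|q0] := leP q 0.
  move: hbq; rewrite (max_l q0) => hb; have -> : b = 0 by apply/le_anti; rewrite hb hb0.
  by rewrite !mul0r.
move: hbq; rewrite (max_r (ltW q0)) => hb.
apply: mulr_ge0_le0; first exact: mulr_ge0 hb0 (ltW Nm0).
rewrite subr_le0; lra.
Qed.

Lemma step_ok xp xc gm : ipnorm ipX (gradRs xc - x0) <= 2 * rho ->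
  tau * delta < resid xc -> ipX (xc - xp) (gradRs xc - xb) <= gm ->
  Dof (step (xp, xc, gm)).1.2 <= Dof xc - cc * kap /\
  ipX ((step (xp, xc, gm)).1.2 - (step (xp, xc, gm)).1.1)
      (gradRs (step (xp, xc, gm)).1.2 - xb) <= (step (xp, xc, gm)).2.
Proof.
move=> hball hres hM.
rewrite /algo_step /=.
set x := gradRs xc.
set r := F x - ydelta.
set g := Lstar x r.
set al := alpha_of ipX ipY Lc mu0 mu1 rule r g.
set m := xc - xp.
set be := beta_of ipX sigma betab al g m gm.
set xn := xc - al *: g + be *: m.
set x' := gradRs xn.
have Hxbball2 : ipnorm ipX (xb - x0) <= 2 * rho by move: Hrho Hxbball; lra.
have [Llin [Lbd Ladj]] := HL hball.
rewrite -/x in Llin Lbd Ladj hball hres hM.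
set nr := ipnorm ipY r.
have nr0 : 0 <= nr by exact: sqrtr_ge0.
have hres' : tau * delta < nr by [].
set ng := ipnorm ipX g.
have ng0 : 0 <= ng by exact: sqrtr_ge0.
have ng_le : ng <= Lc * nr.
  have e1 : ng ^+ 2 = ipY (Lop x g) r by rewrite Ladj nrm_sq.
  have h1 := cs_le HipY (Lop x g) r.
  have h2 := ler_wpM2r nr0 (Lbd g).
  rewrite -/nr -/ng in h1 h2.
  have h3 : ng * ng <= (Lc * nr) * ng.
    have -> : Lc * nr * ng = Lc * ng * nr by ring.
    by rewrite -expr2 e1; apply: le_trans h1 h2.
  move: ng0; rewrite le0r => /orP[/eqP ->|ngp]; first by rewrite mulr_ge0 // ltW.
  by rewrite -(ler_pM2r ngp).
have [al0 [alN alk]] := alpha_facts ng_le.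
rewrite -/al -/nr in al0 alN alk.
have [be0 beq] := beta_facts al g m gm.
rewrite -/be in be0 beq.
have hG : (1 - eta) * nr ^+ 2 - (1 + eta) * delta * nr <= ipX g (x - xb).
  set w := Lop x (x - xb).
  have ew : ipX g (x - xb) = ipY w r by rewrite ipC // -Ladj.
  have hu := Htc Hxbball2 hball.
  have ewn : Lop x (xb - x) = - w by rewrite -opprB (lin_neg Llin).
  rewrite ewn opprK HFxb in hu.
  set u := y - F x + w in hu.
  set e := ydelta - y.
  have eu : ipY w r = ipY u r + ipY r r + ipY e r.
    rewrite -addrA -ipDl //.
    have -> : r + e = F x - y by rewrite /r /e addrA subrK.
    rewrite /u !(ipDl HipY, ipNl HipY); lra.
  have hre : ipnorm ipY (y - F x) <= nr + delta.
    have -> : y - F x = - (r + e) by rewrite /r /e addrA subrK opprB.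
    rewrite nrmN //; apply: le_trans (nrm_tri HipY _ _) _; exact: lerD (lexx _) Hyd.
  have hu2 : ipnorm ipY u * nr <= eta * (nr + delta) * nr.
    apply: ler_wpM2r => //; apply: le_trans hu _; apply: ler_wpM2l => //.
    by case/andP: Heta.
  have c1 := cs_ge HipY u r.
  have c2 := cs_ge HipY e r.
  have c3 := ler_wpM2r nr0 Hyd.
  have rr : ipY r r = nr ^+ 2 by rewrite nrm_sq.
  rewrite ew eu rr; rewrite -/nr in c1 c2 c3 |- *.
  have e0 : 0 <= ipnorm ipY u by exact: sqrtr_ge0.
  case/andP: Heta => eta0 eta1.
  nra.
rewrite -/m in hM.
clearbody m.
rewrite /cc /kap.
have s4 : 0 < 4 * sigma by rewrite mulr_gt0.
have tau0 : 0 < tau by exact: lt_trans ltr01 Htau.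
have Hc' := Hc.
set q := mu0 / (4 * sigma) in Hc' *.
set w := (1 + eta) / tau in Hc' *.
set k0 := Order.min (mu0 / Lc ^+ 2) mu1 in alk *.
have eq : q * (4 * sigma) = mu0 by rewrite /q divfK // gt_eqF.
have ew : w * tau = 1 + eta by rewrite /w divfK // gt_eqF.
have /andP[eta0 eta1] := Heta.
have w0 : 0 <= w by rewrite /w divr_ge0 // ?ltW //; lra.
have k00 : 0 <= k0 by rewrite /k0 le_min divr_ge0 ?ltW // exprn_gt0.
have mx := grad_minim Hprop Hgrad xc.
have mx' := grad_minim Hprop Hgrad xn.
have hb := breg_step HipX Hprop Hsig Hsc xn mx mx'.1.
rewrite -/x -/x' ler_pdivlMr // in hb.
set B := fR Rf x - fR Rf x' - ipX xn (x - x') in hb.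
rewrite /xn !(ipDl HipX, ipBl HipX, ipZl HipX, ipNl HipX, ipDr HipX, ipBr HipX,
   ipZr HipX, ipNr HipX) in hb.
rewrite ?(ipC HipX g xc) ?(ipC HipX m xc) ?(ipC HipX m g) in hb.
rewrite -eq in alN.
have F5 : B <= al * q * nr ^+ 2 - be * gm.
  rewrite -subr_ge0 -(pmulr_lge0 _ s4); lra.
have F6 := ler_wpM2l be0 hM.
have F7 := ler_wpM2l al0 hG.
have F8 : al * ((1 + eta) * delta * nr) <= al * (w * nr * nr).
  apply: ler_wpM2l => //; rewrite -ew.
  have -> : w * tau * delta * nr = w * (tau * delta) * nr by ring.
  apply: ler_wpM2r => //; apply: ler_wpM2l => //; exact: ltW.
have F9 : k0 * (tau * delta) ^+ 2 <= al * nr ^+ 2.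
  apply: ler_pM => //; first by rewrite exprn_ge0 // mulr_ge0 // ltW.
  by rewrite ler_pXn2r ?nnegrE ?mulr_ge0 // ?ltW.
have F10 := ler_wpM2l (ltW Hc') F9.
rewrite /Dof -/x -/x' /B in F5 *.
rewrite /xn !(ipDl HipX, ipBl HipX, ipZl HipX, ipNl HipX, ipDr HipX, ipBr HipX,
   ipZr HipX, ipNr HipX) in F5 F6 F7 *.
rewrite ?(ipC HipX g xc) ?(ipC HipX m xc) ?(ipC HipX m g).
split; lra.
Qed.

Definition st n := algo_state ipX ipY F Lstar gradRs ydelta delta eta sigma Lc mu0 mu1 betab rule xi0 n.

Lemma Dof_ge0 xi : 0 <= Dof xi.
Proof.
have mx := grad_minim Hprop Hgrad xi.
have g := growth HipX Hprop Hsc mx Hfxb.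
apply: (le_trans _ g); exact: mulr_ge0 (ltW Hsig) (ip_ge0 HipX _).
Qed.

Lemma ball_of xi : Dof xi <= sigma * rho ^+ 2 -> ipnorm ipX (gradRs xi - x0) <= 2 * rho.
Proof.
move=> hD.
have mx := grad_minim Hprop Hgrad xi.
have g := growth HipX Hprop Hsc mx Hfxb.
have h1 : ipX (xb - gradRs xi) (xb - gradRs xi) <= rho ^+ 2.
  rewrite -(ler_pM2l Hsig); exact: le_trans g hD.
have h2 := nrm_le_sq HipX (ltW Hrho) h1.
have -> : gradRs xi - x0 = (gradRs xi - xb) + (xb - x0) by rewrite addrA subrK.
apply: le_trans (nrm_tri HipX _ _) _.
rewrite -opprB nrmN //; move: Hxbball; lra.
Qed.

Lemma cckap : 0 < cc * kap.
Proof.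
apply: mulr_gt0; first exact: Hc.
apply: mulr_gt0; last by rewrite exprn_gt0 // mulr_gt0 // (lt_trans ltr01 Htau).
by rewrite lt_min Hmu1 andbT divr_gt0 // exprn_gt0.
Qed.

Lemma inv_all (H0 : Dof xi0 <= sigma * rho ^+ 2)
  (nostop : forall n, tau * delta < resid (st n).1.2) :
  forall n, Dof (st n).1.2 + n%:R * (cc * kap) <= Dof xi0 /\
    ipX ((st n).1.2 - (st n).1.1) (gradRs (st n).1.2 - xb) <= (st n).2.
Proof.
have ck := cckap.
elim=> [|n [IH1 IH2]].
  by rewrite /st /= mul0r addr0 lexx subrr ip0l.
have hb : Dof (st n).1.2 <= sigma * rho ^+ 2.
  apply: le_trans H0; apply: le_trans IH1; rewrite lerDl mulr_ge0 // ltW //.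
have eS : st n.+1 = step (st n) by rewrite /st /algo_state iterS.
move: IH1 IH2 hb (nostop n); rewrite eS.
case: (st n) => [[a b] c] /= IH1 IH2 hb hr.
have [h1 h2] := step_ok (ball_of hb) hr IH2.
split=> //.
rewrite -natr1; lra.
Qed.

Lemma terminates (H0 : Dof xi0 <= sigma * rho ^+ 2) :
  exists n, resid (st n).1.2 <= tau * delta.
Proof.
apply: NNPP => hne.
have nostop : forall n, tau * delta < resid (st n).1.2.
  move=> n; rewrite ltNge; apply/negP => h; apply: hne; by exists n.
have ck := cckap.
set N := Num.truncn (Dof xi0 / (cc * kap)).
have hN := truncnS_gt (Dof xi0 / (cc * kap)).
have [h1 _] := inv_all H0 nostop N.+1.
have := Dof_ge0 (st N.+1).1.2.
move: hN; rewrite -/N ltr_pdivrMr // => hN.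
lra.
Qed.
End Main.

Theorem mainTheorem3 (R : realType) (X Y : lmodType R)
  (ipX : X -> X -> R) (ipY : Y -> Y -> R)
  (Rf : X -> \bar R) (sigma : R)
  (F : X -> Y) (domF : X -> Prop) (y : Y)
  (rho : R) (x0 xi0 : X)
  (Lop : X -> X -> Y) (Lstar : X -> Y -> X) (eta Lc : R)
  (gradRs : X -> X)
  (ydelta : Y) (delta tau mu0 mu1 : R) (betab : \bar R) (rule : step_rule) :
  hilbert ipX -> hilbert ipY ->
  (* R proper, lsc, strongly convex *)
  proper_fun Rf -> lsc ipX Rf -> 0 < sigma -> strongly_convex ipX Rf sigma ->
  (* gradRs = grad R^* *)
  is_grad_conj ipX Rf gradRs ->
  (* (b) *)
  0 < rho -> subdiff ipX Rf x0 xi0 ->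
  (forall x, ipnorm ipX (x - x0) <= 2 * rho -> domF x) ->
  (exists xb, domF xb /\ F xb = y /\
     (bregman ipX Rf xi0 xb x0 <= (sigma * rho ^+ 2)%:E)%E) ->
  (* (c) weak closedness *)
  (forall (u : nat -> X) (x : X) (v : Y), (forall n, domF (u n)) ->
     weak_cvg ipX u x -> tends_to0 (fun n => ipnorm ipY (F (u n) - v)) ->
     domF x /\ F x = v) ->
  (* (d) *)
  (forall x, ipnorm ipX (x - x0) <= 2 * rho ->
     (forall (a : R) h k, Lop x (a *: h + k) = a *: Lop x h + Lop x k) /\
     (forall h, ipnorm ipY (Lop x h) <= Lc * ipnorm ipX h) /\
     (forall h k, ipY (Lop x h) k = ipX h (Lstar x k))) ->
  (forall x, ipnorm ipX (x - x0) <= 2 * rho ->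
     forall e, 0 < e -> exists d, 0 < d /\
       forall x', ipnorm ipX (x' - x0) <= 2 * rho -> ipnorm ipX (x' - x) <= d ->
         forall h, ipnorm ipY (Lop x' h - Lop x h) <= e * ipnorm ipX h) ->
  0 <= eta < 1 ->
  (forall x xb, ipnorm ipX (x - x0) <= 2 * rho -> ipnorm ipX (xb - x0) <= 2 * rho ->
     ipnorm ipY (F x - F xb - Lop xb (x - xb)) <= eta * ipnorm ipY (F x - F xb)) ->
  0 < Lc ->
  (* noisy data and parameters *)
  0 < delta -> ipnorm ipY (ydelta - y) <= delta ->
  1 < tau -> (0 < betab)%E -> 0 < mu0 -> 0 < mu1 ->
  0 < 1 - (1 + eta) / tau - eta - mu0 / (4 * sigma) ->
  exists ndelta : nat,
    ipnorm ipY (F (algo_x ipX ipY F Lstar gradRs ydelta delta eta sigma Lc mu0 mu1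
                      betab rule xi0 ndelta) - ydelta) <= tau * delta /\
    forall n : nat, (n < ndelta)%N ->
      tau * delta < ipnorm ipY (F (algo_x ipX ipY F Lstar gradRs ydelta delta eta sigma
                                   Lc mu0 mu1 betab rule xi0 n) - ydelta).
Proof.
move=> hX hY Hprop Hlsc Hsig Hsc Hgrad Hrho Hsub Hdom [xb [_ [HFxb Hbr]]] Hwc HL Hcont
  Heta Htc HLc Hdelta Hyd Htau Hbeta Hmu0 Hmu1 Hc.
have HipX := proj1 hX; have HipY := proj1 hY.
have fx0 : Rf x0 \is a fin_num := Hsub.1.
have Hfxb : Rf xb \is a fin_num.
  move: Hbr; rewrite /bregman (fin_ex fx0).
  have := Hprop.2 xb.
  by case: (Rf xb).
have key : fR Rf xb - fR Rf x0 - ipX xi0 (xb - x0) <= sigma * rho ^+ 2.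
  by move: Hbr; rewrite /bregman (fin_ex fx0) (fin_ex Hfxb) -!EFinB lee_fin.
have mx0 := subdiff_minim HipX Hsub.
have gxb := growth HipX Hprop Hsc mx0 Hfxb.
have Hxbball : ipnorm ipX (xb - x0) <= rho.
  apply: (nrm_le_sq HipX (ltW Hrho)).
  rewrite -(ler_pM2l Hsig); exact: le_trans gxb key.
have H0 : Dof ipX Rf gradRs xb xi0 <= sigma * rho ^+ 2.
  have mg := grad_minim Hprop Hgrad xi0.
  have e0 : gradRs xi0 = x0.
    have g1 := growth HipX Hprop Hsc mx0 mg.1.
    have g2 := mg.2 x0 fx0.
    have hN : ipX (gradRs xi0 - x0) (gradRs xi0 - x0) = 0.
      apply/le_anti; rewrite ip_ge0 // andbT.
      rewrite -(ler_pM2l Hsig) mulr0; apply: le_trans g1 _.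
      move: g2; rewrite !(ipBr HipX); lra.
    by apply/eqP; rewrite -subr_eq0; apply/eqP; exact: (ip_eq0 HipX hN).
  by rewrite /Dof e0.
have [n0 hn0] := terminates rule HipX HipY Hprop Hsig Hsc Hgrad Hrho HFxb Hfxb Hxbball
  HL Heta Htc HLc Hdelta Hyd Htau Hbeta Hmu0 Hmu1 Hc H0.
pose P := fun n => ipnorm ipY (F (algo_x ipX ipY F Lstar gradRs ydelta delta eta sigma Lc mu0 mu1
                      betab rule xi0 n) - ydelta) <= tau * delta.
have exP : exists n, P n by exists n0.
case: (ex_minnP exP) => n Pn hmin.
exists n; split=> // k hk.
rewrite ltNge; apply/negP => Pk.
by have := hmin k Pk; rewrite leqNgt hk.
Qed.
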